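(* Let $\mu$ be a probability measure on $\mathbb{R}$ having an atom, i.e. $\mu(\{x\})>0$ for some $x\in\mathbb{R}$. Let $k\ge1$ and let $X_1,X_2,\dots$ be i.i.d. $k\times k$ random matrices whose entries are i.i.d. with law $\mu$, and $A_n=X_1X_2\cdots X_n$. Then $\lim_{n\to\infty}\Pr(A_n\text{ has all eigenvalues real})=1$. *)

(* Defs.v *)
From Stdlib Require Import Reals List.
Open Scope R_scope.

Definition sigma_algebra {T : Type} (F : (T -> Prop) -> Prop) : Prop :=
  F (fun _ => True) /\
  (forall A, F A -> F (fun x => ~ A x)) /\
  (forall A : nat -> T -> Prop, (forall n, F (A n)) -> F (fun x => exists n, A n x)).

(** [P] is a probability measure on the measurable space [(T, F)]
    (P is total on subsets, but only its values on [F] are constrained). *)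
Definition probability_measure {T : Type} (F : (T -> Prop) -> Prop)
    (P : (T -> Prop) -> R) : Prop :=
  sigma_algebra F /\
  P (fun _ => True) = 1 /\
  (forall A, F A -> 0 <= P A) /\
  (forall A : nat -> T -> Prop,
     (forall n, F (A n)) ->
     (forall n m x, n <> m -> A n x -> A m x -> False) ->
     infinite_sum (fun n => P (A n)) (P (fun x => exists n, A n x))).

Definition Borel (B : R -> Prop) : Prop :=
  forall G : (R -> Prop) -> Prop,
    sigma_algebra G -> (forall a, G (fun x => x <= a)) -> G B.

(** * Real k x k matrices, represented as functions nat -> nat -> R
      (only the entries with indices < k are relevant). *)

Definition sumR (k : nat) (f : nat -> R) : R :=
  fold_right Rplus 0 (map f (seq 0 k)).

Definition mat_mul (k : nat) (A B : nat -> nat -> R) : nat -> nat -> R :=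
  fun i j => sumR k (fun l => A i l * B l j).

Definition mat_id : nat -> nat -> R :=
  fun i j => if Nat.eqb i j then 1 else 0.

(** [mat_prod k M n] = M 1 * M 2 * ... * M n  (identity for n = 0). *)
Fixpoint mat_prod (k : nat) (M : nat -> nat -> nat -> R) (n : nat)
  : nat -> nat -> R :=
  match n with
  | O => mat_id
  | S m => mat_mul k (mat_prod k M m) (M (S m))
  end.

Definition minor0 (A : nat -> nat -> R) (j : nat) : nat -> nat -> R :=
  fun r c => A (S r) (if Nat.ltb c j then c else S c).

Fixpoint det (k : nat) (A : nat -> nat -> R) : R :=
  match k with
  | O => 1
  | S m => sumR (S m) (fun j => (-1) ^ j * A O j * det m (minor0 A j))
  end.

Definition charpoly_eval (k : nat) (A : nat -> nat -> R) (x : R) : R :=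
  det k (fun i j => x * mat_id i j - A i j).

Definition all_eigenvalues_real (k : nat) (A : nat -> nat -> R) : Prop :=
  exists lam : list R, length lam = k /\
    forall x : R, charpoly_eval k A x = fold_right Rmult 1 (map (fun l => x - l) lam).

(* Main.v *)
Require Import Defs.
From Stdlib Require Import Reals List Permutation Lra Lia ZArith Classical FunctionalExtensionality PropExtensionality.
Open Scope R_scope.

Section SA.
Variable Omega : Type.
Variable F : (Omega -> Prop) -> Prop.
Hypothesis HF : sigma_algebra F.

Lemma F_ext (A B : Omega -> Prop) : (forall w, A w <-> B w) -> F A -> F B.
Proof.
intros H HA. replace B with A; auto.
apply functional_extensionality; intro w; apply propositional_extensionality; auto.
Qed.

Lemma F_True : F (fun _ => True).
Proof. destruct HF as [H _]; exact H. Qed.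

Lemma F_compl A : F A -> F (fun w => ~ A w).
Proof. destruct HF as [_ [H _]]; apply H. Qed.

Lemma F_cunion (A : nat -> Omega -> Prop) :
  (forall n, F (A n)) -> F (fun w => exists n, A n w).
Proof. destruct HF as [_ [_ H]]; apply H. Qed.

Lemma F_False : F (fun _ => False).
Proof.
apply (F_ext (fun _ => ~ True)); [tauto|]. apply F_compl, F_True.
Qed.

Lemma F_cinter (A : nat -> Omega -> Prop) :
  (forall n, F (A n)) -> F (fun w => forall n, A n w).
Proof.
intros H. apply (F_ext (fun w => ~ exists n, ~ A n w)).
- intro w; split.
  + intros H1 n. apply NNPP. intro H2. apply H1. exists n. exact H2.
  + intros H1 [n Hn]. apply Hn, H1.
- apply F_compl, F_cunion. intro n. apply F_compl, H.
Qed.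

Lemma F_or A B : F A -> F B -> F (fun w => A w \/ B w).
Proof.
intros HA HB.
apply (F_ext (fun w => exists n, (match n with O => A | _ => B end) w)).
- intro w; split.
  + intros [[|n] Hn]; auto.
  + intros [H|H]; [exists O | exists 1%nat]; exact H.
- apply F_cunion. intros [|n]; auto.
Qed.

Lemma F_and A B : F A -> F B -> F (fun w => A w /\ B w).
Proof.
intros HA HB.
apply (F_ext (fun w => ~ (~ A w \/ ~ B w))).
- intro w; tauto.
- apply F_compl, F_or; apply F_compl; auto.
Qed.

Lemma F_imp A B : F A -> F B -> F (fun w => A w -> B w).
Proof.
intros HA HB.
apply (F_ext (fun w => ~ A w \/ B w)).
- intro w; tauto.
- apply F_or; auto. apply F_compl; auto.
Qed.

Lemma F_const (P : Prop) : F (fun _ => P).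
Proof.
destruct (classic P) as [H|H].
- apply (F_ext (fun _ => True)); [tauto|apply F_True].
- apply (F_ext (fun _ => False)); [tauto|apply F_False].
Qed.

Definition measf (f : Omega -> R) := forall c, F (fun w => f w <= c).

Lemma measf_ext f g : (forall w, f w = g w) -> measf f -> measf g.
Proof.
intros H Hf c. apply (F_ext (fun w => f w <= c)); [intro w; rewrite H; tauto|apply Hf].
Qed.

Lemma measf_lt f : measf f -> forall c, F (fun w => f w < c).
Proof.
intros Hf c.
apply (F_ext (fun w => exists n, f w <= c - / INR (S n))).
- intro w; split.
  + intros [n Hn]. assert (0 < / INR (S n)).
    { apply Rinv_0_lt_compat. apply lt_0_INR. lia. }
    lra.
  + intros H. destruct (archimed_cor1 (c - f w)) as [N [HN1 HN2]]; [lra|].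
    destruct N as [|N]; [lia|]. exists N. lra.
- apply F_cunion. intro n. apply Hf.
Qed.

Lemma measf_ge f : measf f -> forall c, F (fun w => c <= f w).
Proof.
intros Hf c. apply (F_ext (fun w => ~ f w < c)).
- intro w; split; intro H; lra.
- apply F_compl, measf_lt, Hf.
Qed.

Lemma measf_gt f : measf f -> forall c, F (fun w => c < f w).
Proof.
intros Hf c. apply (F_ext (fun w => ~ f w <= c)).
- intro w; split; intro H; lra.
- apply F_compl, Hf.
Qed.

Lemma measf_const (a : R) : measf (fun _ => a).
Proof. intro c. apply F_const. Qed.

Lemma measf_scal (a : R) f : measf f -> measf (fun w => a * f w).
Proof.
intros Hf c.
destruct (Rtotal_order a 0) as [Ha|[Ha|Ha]].
- apply (F_ext (fun w => c / a <= f w)).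
  + intro w. split; intro H.
    * apply (Rmult_le_compat_neg_l a) in H; [|lra].
      unfold Rdiv in H. rewrite <- Rmult_assoc, (Rmult_comm a c), Rmult_assoc,
        Rinv_r, Rmult_1_r in H; lra.
    * apply (Rmult_le_reg_l (- a)); [lra|].
      unfold Rdiv. replace (- a * (c * / a)) with (- c) by (field; lra). lra.
  + apply measf_ge, Hf.
- subst a. apply (F_ext (fun _ => 0 <= c)).
  + intro w. rewrite Rmult_0_l. tauto.
  + apply F_const.
- apply (F_ext (fun w => f w <= c / a)).
  + intro w. split; intro H.
    * apply (Rmult_le_compat_l a) in H; [|lra].
      replace (a * (c / a)) with c in H by (field; lra). lra.
    * apply (Rmult_le_reg_l a); [lra|].
      replace (a * (c / a)) with c by (field; lra). lra.
  + apply Hf.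
Qed.

Lemma IZR_nats (z : Z) : exists m m' : nat, IZR z = INR m - INR m'.
Proof.
destruct z as [|p|p].
- exists O, O. simpl. lra.
- exists (Pos.to_nat p), O. rewrite INR_IZR_INZ, positive_nat_Z. simpl. lra.
- exists O, (Pos.to_nat p). rewrite (INR_IZR_INZ (Pos.to_nat p)), positive_nat_Z. simpl.
  rewrite <- Pos2Z.opp_pos, opp_IZR. lra.
Qed.

Lemma dense_q (x y : R) : x < y ->
  exists N m m' : nat, x < (INR m - INR m') / INR N < y.
Proof.
intros Hxy.
destruct (archimed_cor1 (y - x)) as [N [HN1 HN2]]; [lra|].
assert (HN : 0 < INR N) by (apply lt_0_INR; lia).
destruct (archimed (x * INR N)) as [H1 H2].
destruct (IZR_nats (up (x * INR N))) as [m [m' Hm]].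
exists N, m, m'. rewrite <- Hm. split.
- apply (Rmult_lt_reg_r (INR N)); auto.
  unfold Rdiv. rewrite Rmult_assoc, Rinv_l, Rmult_1_r; lra.
- apply (Rmult_lt_reg_r (INR N)); auto.
  unfold Rdiv. rewrite Rmult_assoc, Rinv_l, Rmult_1_r; [|lra].
  assert (/ INR N * INR N = 1) by (field; lra).
  assert (y * INR N - x * INR N > 1).
  { replace (y * INR N - x * INR N) with ((y - x) * INR N) by ring.
    apply (Rmult_lt_compat_r (INR N)) in HN1; auto.
    rewrite H in HN1. lra. }
  lra.
Qed.

Lemma measf_plus f g : measf f -> measf g -> measf (fun w => f w + g w).
Proof.
intros Hf Hg c.
apply (F_ext (fun w => ~ exists N, exists m, exists m',
   ((INR m - INR m') / INR N < f w /\ c - (INR m - INR m') / INR N < g w))).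
- intro w. split.
  + intros H. apply Rnot_lt_le. intro Hc. apply H.
    destruct (dense_q (c - g w) (f w)) as [N [m [m' Hq]]]; [lra|].
    exists N, m, m'. lra.
  + intros H [N [m [m' Hq]]]. lra.
- apply F_compl. apply F_cunion; intro N. apply F_cunion; intro m.
  apply F_cunion; intro m'. apply F_and; apply measf_gt; auto.
Qed.

Lemma measf_sq f : measf f -> measf (fun w => f w * f w).
Proof.
intros Hf c.
destruct (Rlt_or_le c 0) as [Hc|Hc].
- apply (F_ext (fun _ => False)).
  + intro w. split; [tauto|]. intro H. assert (0 <= f w * f w) by nra. lra.
  + apply F_False.
- apply (F_ext (fun w => - sqrt c <= f w /\ f w <= sqrt c)).
  + intro w. assert (Hs := sqrt_sqrt c Hc). assert (Hs0 := sqrt_pos c).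
    split.
    * intros [H1 H2]. nra.
    * intro H. split; nra.
  + apply F_and. apply measf_ge, Hf. apply Hf.
Qed.

Lemma measf_mult f g : measf f -> measf g -> measf (fun w => f w * g w).
Proof.
intros Hf Hg.
apply (measf_ext (fun w => / 4 * ((f w + g w) * (f w + g w) +
   (-1) * ((f w + (-1) * g w) * (f w + (-1) * g w))))).
- intro w. field.
- apply measf_scal, measf_plus; [apply measf_sq, measf_plus; auto|].
  apply measf_scal, measf_sq, measf_plus; auto. apply measf_scal; auto.
Qed.

Lemma measf_opp f : measf f -> measf (fun w => - f w).
Proof.
intros Hf. apply (measf_ext (fun w => -1 * f w)); [intro; ring|]. apply measf_scal; auto.
Qed.

Lemma F_le2 f g : measf f -> measf g -> F (fun w => f w <= g w).
Proof.
intros Hf Hg. apply (F_ext (fun w => f w + - g w <= 0)).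
- intro w; split; intro; lra.
- apply measf_plus; auto. apply measf_opp; auto.
Qed.

Lemma F_lt2 f g : measf f -> measf g -> F (fun w => f w < g w).
Proof.
intros Hf Hg. apply (F_ext (fun w => f w + - g w < 0)).
- intro w; split; intro; lra.
- apply measf_lt, measf_plus; auto. apply measf_opp; auto.
Qed.

Lemma F_eq2 f g : measf f -> measf g -> F (fun w => f w = g w).
Proof.
intros Hf Hg. apply (F_ext (fun w => f w <= g w /\ g w <= f w)).
- intro w; split; intro; lra.
- apply F_and; apply F_le2; auto.
Qed.

End SA.

Lemma Borel_singleton (a : R) : Borel (fun y => y = a).
Proof.
intros G HG Hhl.
apply (F_eq2 R G HG (fun y => y) (fun _ => a)).
- intro c. apply Hhl.
- apply measf_const; auto.
Qed.

Lemma fold_plus_ext (f g : nat -> R) (s : list nat) :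
  (forall i, In i s -> f i = g i) ->
  fold_right Rplus 0 (map f s) = fold_right Rplus 0 (map g s).
Proof.
induction s as [|a s IH]; intros H; simpl; auto.
rewrite H, IH; auto. intros i Hi; apply H; simpl; auto. simpl; auto.
Qed.

Lemma sumR_ext n f g : (forall i, (i < n)%nat -> f i = g i) -> sumR n f = sumR n g.
Proof.
intros H. unfold sumR. apply fold_plus_ext. intros i Hi.
apply in_seq in Hi. apply H. lia.
Qed.

Lemma det_ext n : forall A B : nat -> nat -> R,
  (forall i j, (i < n)%nat -> (j < n)%nat -> A i j = B i j) -> det n A = det n B.
Proof.
induction n as [|n IH]; intros A B H; simpl; auto.
apply sumR_ext. intros j Hj. rewrite H by lia. f_equal.
apply IH. intros r c Hr Hc. unfold minor0. apply H; [lia|].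
destruct (Nat.ltb c j); lia.
Qed.

Definition sgn (j : nat) : R := (-1) ^ j.

Arguments measf {Omega} F f.
Arguments measf_const {Omega F} HF a.
Arguments measf_plus {Omega F} HF {f g}.
Arguments measf_opp {Omega F} HF {f}.
Arguments measf_ext {Omega F} f {g}.
Arguments measf_scal {Omega F} HF a {f}.
Arguments measf_mult {Omega F} HF {f g}.
Arguments F_const {Omega F} HF P.
Arguments F_ext {Omega F} A {B}.
Arguments F_eq2 {Omega F} HF {f g}.
Arguments F_lt2 {Omega F} HF {f g}.
Arguments F_le2 {Omega F} HF {f g}.
Arguments F_and {Omega F} HF {A B}.
Arguments F_or {Omega F} HF {A B}.
Arguments F_imp {Omega F} HF {A B}.
Arguments F_compl {Omega F} HF {A}.
Module MC.
From HB Require Import structures.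
From mathcomp Require Import all_boot all_order all_algebra.
From mathcomp Require Import Rstruct.
From mathcomp Require Import ordered_qelim qe_rcf.
From mathcomp Require Import zify.
From Stdlib Require Import Lia.
Set Implicit Arguments. Unset Strict Implicit. Unset Printing Implicit Defensive.
Import Order.TTheory GRing.Theory Num.Theory.
Local Open Scope ring_scope.

Lemma sumR_big n (f : nat -> R) : sumR n f = \sum_(i < n) f i.
Proof.
rewrite /sumR -(big_mkord xpredT) /index_iota subn0.
have -> : List.seq 0 n = iota 0 n.
  elim: n 0%N => //= n IH m; by rewrite IH.
elim: (iota 0 n) => [|a l IH] /=; first by rewrite big_nil.
by rewrite big_cons IH.
Qed.

Lemma ltbE m n : Nat.ltb m n = (m < n)%N.
Proof.
case: (ltnP m n) => h.
  by apply/Nat.ltb_lt; move/ssrnat.ltP: h; lia.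
by apply/Nat.ltb_ge; move/ssrnat.leP: h; lia.
Qed.

Lemma det_mx n (A : nat -> nat -> R) :
  det n A = \det (\matrix_(i < n, j < n) A i j).
Proof.
elim: n A => [|n IH] A; first by rewrite det_mx00.
rewrite (expand_det_row _ ord0) /= sumR_big; apply: eq_bigr => j _.
rewrite IH /cofactor mxE RpowE add0n.
rewrite !RmultE mulrCA -mulrA; congr (_ * (_ * \det _)).
apply/matrixP => r c; rewrite !mxE /minor0 /=.
congr (A _ _); rewrite /bump.
rewrite ltbE; case: (ltnP c j) => h //=.
Qed.

Lemma charpoly_hor k A x :
  charpoly_eval k A x = (char_poly (\matrix_(i < k, j < k) A i j)).[x].
Proof.
rewrite /charpoly_eval det_mx.
have -> : forall p : {poly R}, p.[x] = horner_eval x p by [].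
rewrite /char_poly -det_map_mx; congr (\det _); apply/matrixP=> i j; rewrite !mxE.
rewrite -[RHS]/(('X *+ (i == j) - (A i j)%:P).[x]) !hornerE hornerMn hornerX /mat_id.
have -> : Nat.eqb i j = (i == j).
  by case: (eqVneq i j) => [->|h]; [apply/Nat.eqb_eq | apply/Nat.eqb_neq => /val_inj /eqP; rewrite (negbTE h)].
rewrite RminusE RmultE; case: (i == j) => /=; by rewrite ?mulr1n ?mulr0n ?mulr1 ?mulr0.
Qed.

Lemma rank1_charpoly n (u : 'cV[R]_n) (v : 'rV[R]_n) :
  'X * char_poly (u *m v) = 'X^n * ('X - ((v *m u) 0 0)%:P).
Proof.
set U := map_mx polyC u; set V := map_mx polyC v.
pose B := block_mx (1 : 'M[{poly R}]_1) V U ('X%:M : 'M_n).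
have e1 : \det B = char_poly (u *m v).
  have : block_mx 1 0 (-U) 1 *m B = block_mx 1 V 0 ('X%:M - U *m V).
    rewrite mulmx_block !mul1mx !mul0mx !addr0 mulNmx mulmx1 addNr.
    by rewrite mulNmx addrC.
  move/(congr1 determinant); rewrite det_mulmx det_lblock det_ublock !det1 !mul1r.
  by move=> ->; rewrite /char_poly /char_poly_mx map_mxM.
have e2 : 'X * \det B = ('X - ((v *m u) 0 0)%:P) * 'X^n.
  have : block_mx ('X%:M : 'M_1) (-V) 0 1 *m B = block_mx ('X%:M - V *m U) 0 U 'X%:M.
    rewrite mulmx_block !mul1mx !mul0mx !add0r mulmx1 mul_scalar_mx mulNmx mul_mx_scalar.
    by rewrite scalerN subrr.
  move/(congr1 determinant); rewrite det_mulmx det_lblock det_ublock det1 mulr1 det_scalar1.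
  move=> ->; rewrite det_mx11 det_scalar [_ 0 0]mxE /V /U -map_mxM !mxE mulr1n.
  by [].
by rewrite -e1 e2 mulrC.
Qed.

Lemma rank1_real k (A : nat -> nat -> R) (u v : nat -> R) :
  (forall i j, (i < k)%coq_nat -> (j < k)%coq_nat -> A i j = u i * v j) ->
  all_eigenvalues_real k A.
Proof.
move=> HA; case: k HA => [|m] HA.
  by exists nil; split => // x; rewrite /charpoly_eval.
set cu := (\col_(i < m.+1) u i); set rv := (\row_(j < m.+1) v j).
set c := (rv *m cu) 0 0.
have HM : \matrix_(i < m.+1, j < m.+1) A i j = cu *m rv.
  apply/matrixP => i j; rewrite !mxE big_ord1 !mxE HA //; exact/ssrnat.ltP.
have Hcp : char_poly (cu *m rv) = 'X^m * ('X - c%:P).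
  apply: (@mulfI _ 'X); first by rewrite polyX_eq0.
  by rewrite rank1_charpoly mulrA -exprS.
exists (c :: List.repeat 0%R m); split; first by rewrite /= List.repeat_length.
move=> x; rewrite charpoly_hor HM Hcp hornerM hornerXn hornerXsubC /=.
rewrite mulrC; congr (_ * _).
elim: m {cu rv c HA HM Hcp} => [|m IH] //=.
by rewrite -IH exprS RminusE subr0.
Qed.


Section Q.
Variables (Omega : Type) (F : (Omega -> Prop) -> Prop).
Hypothesis HF : sigma_algebra F.

Lemma measfD (f g : Omega -> R) : measf F f -> measf F g -> measf F (fun w => f w + g w).
Proof. exact (measf_plus HF). Qed.
Lemma measfN (f : Omega -> R) : measf F f -> measf F (fun w => - f w).
Proof. exact (measf_opp HF). Qed.
Lemma measfM (f g : Omega -> R) : measf F f -> measf F g -> measf F (fun w => f w * g w).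
Proof. exact (measf_mult HF). Qed.

Lemma meas_eval (E : Omega -> seq R)
  (HE : forall i, measf F (fun w => nth 0 (E w) i)) (t : GRing.term R) :
  GRing.rterm t -> measf F (fun w => GRing.eval (E w) t).
Proof.
elim: t => [i|x|n|t1 IH1 t2 IH2|t1 IH1|t1 IH1 n|t1 IH1 t2 IH2|t1 IH1|t1 IH1 n] /=.
- move=> _; exact: HE.
- move=> _; exact (measf_const HF x).
- move=> _; exact (measf_const HF n%:R).
- move=> /andP[h1 h2]; exact: measfD (IH1 h1) (IH2 h2).
- move=> h1; exact: measfN (IH1 h1).
- move=> h1; apply: (measf_ext (fun w => n%:R * GRing.eval (E w) t1)).
    by move=> w; rewrite mulr_natl.
  exact: measfM (measf_const HF _) (IH1 h1).
- move=> /andP[h1 h2]; exact: measfM (IH1 h1) (IH2 h2).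
- by [].
- move=> h1; elim: n => [|n IHn].
    exact (measf_const HF 1).
  apply: (measf_ext (fun w => GRing.eval (E w) t1 * GRing.eval (E w) t1 ^+ n)).
    by move=> w; rewrite exprS.
  exact: measfM (IH1 h1) IHn.
Qed.

Lemma meas_qf (E : Omega -> seq R)
  (HE : forall i, measf F (fun w => nth 0 (E w) i)) (g : ord.formula R) :
  ord.qf_form g && ord.rformula g -> F (fun w => ord.qf_eval (E w) g).
Proof.
elim: g => //=.
- move=> b _; exact (F_const HF _).
- move=> t1 t2 /andP[h1 h2].
  apply: (F_ext (fun w => GRing.eval (E w) t1 = GRing.eval (E w) t2)).
    by move=> w; split => [/eqP|/eqP].
  exact (F_eq2 HF (meas_eval HE h1) (meas_eval HE h2)).
- move=> t1 t2 /andP[h1 h2].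
  apply: (F_ext (fun w => Rlt (GRing.eval (E w) t1) (GRing.eval (E w) t2))).
    by move=> w; split => [/RltP|/RltP].
  exact (F_lt2 HF (meas_eval HE h1) (meas_eval HE h2)).
- move=> t1 t2 /andP[h1 h2].
  apply: (F_ext (fun w => Rle (GRing.eval (E w) t1) (GRing.eval (E w) t2))).
    by move=> w; split => [/RleP|/RleP].
  exact (F_le2 HF (meas_eval HE h1) (meas_eval HE h2)).
- move=> f1 IH1 f2 IH2 /andP[/andP[q1 q2] /andP[r1 r2]].
  apply: (F_ext (fun w => ord.qf_eval (E w) f1 /\ ord.qf_eval (E w) f2)).
    by move=> w; split => [/andP|/andP].
  exact (F_and HF (IH1 (introT andP (conj q1 r1))) (IH2 (introT andP (conj q2 r2)))).
- move=> f1 IH1 f2 IH2 /andP[/andP[q1 q2] /andP[r1 r2]].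
  apply: (F_ext (fun w => ord.qf_eval (E w) f1 \/ ord.qf_eval (E w) f2)).
    by move=> w; split => [/orP|/orP].
  exact (F_or HF (IH1 (introT andP (conj q1 r1))) (IH2 (introT andP (conj q2 r2)))).
- move=> f1 IH1 f2 IH2 /andP[/andP[q1 q2] /andP[r1 r2]].
  apply: (F_ext (fun w => ord.qf_eval (E w) f1 -> ord.qf_eval (E w) f2)).
    by move=> w; split => [/implyP|/implyP].
  exact (F_imp HF (IH1 (introT andP (conj q1 r1))) (IH2 (introT andP (conj q2 r2)))).
- move=> f1 IH1 h.
  apply: (F_ext (fun w => ~ ord.qf_eval (E w) f1)).
    by move=> w; split => [/negP|/negP].
  exact (F_compl HF (IH1 h)).
Qed.
End Q.

Definition sumT n (f : nat -> GRing.term R) : GRing.term R :=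
  List.fold_right (@GRing.Add R) (GRing.Const 0) (List.map f (List.seq 0 n)).
Definition minor0T (A : nat -> nat -> GRing.term R) (j : nat) : nat -> nat -> GRing.term R :=
  fun r c => A r.+1 (if Nat.ltb c j then c else c.+1).
Fixpoint detT n (A : nat -> nat -> GRing.term R) : GRing.term R :=
  match n with
  | O => GRing.Const 1
  | S m => sumT m.+1 (fun j => GRing.Mul (GRing.Mul (GRing.Const (sgn j)) (A O j))
                                       (detT m (minor0T A j)))
  end.

Lemma eval_sumT e n f : GRing.eval e (sumT n f) = sumR n (fun i => GRing.eval e (f i)).
Proof. by rewrite /sumT /sumR; elim: (List.seq 0 n) => //= a l ->. Qed.

Lemma eval_detT e n A : GRing.eval e (detT n A) = det n (fun i j => GRing.eval e (A i j)).
Proof.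
elim: n A => [|n IH] A; first by [].
rewrite [detT _ _]/= eval_sumT; apply: sumR_ext => j _ /=.
by rewrite IH.
Qed.

Definition NN k := (k * k)%N.
Definition mt k (i j : nat) : GRing.term R :=
  GRing.Add (GRing.Mul (GRing.Var R (NN k + k)%N) (GRing.Const (mat_id i j)))
            (GRing.Opp (GRing.Var R (i * k + j)%N)).
Definition prodT k : GRing.term R :=
  List.fold_right (@GRing.Mul R) (GRing.Const 1)
    (List.map (fun l => GRing.Add (GRing.Var R (NN k + k)%N) (GRing.Opp (GRing.Var R (NN k + l)%N)))
       (List.seq 0 k)).
Fixpoint exchain n m (g : ord.formula R) : ord.formula R :=
  match m with O => g | S m' => ord.Exists n (exchain n.+1 m' g) end.
Definition fk k : ord.formula R :=
  exchain (NN k) k (ord.Forall (NN k + k)%N (ord.Equal (detT k (mt k)) (prodT k))).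
Definition envA k (A : nat -> nat -> R) : seq R :=
  [seq A (i %/ k)%N (i %% k)%N | i <- iota 0 (k * k)].

Lemma set_nth_size (s : seq R) x : set_nth 0 s (size s) x = rcons s x.
Proof. by elim: s => //= a s ->. Qed.

Lemma holds_exchain m : forall n e g, size e = n ->
  (ord.holds e (exchain n m g) <-> exists l, size l = m /\ ord.holds (e ++ l) g).
Proof.
elim: m => [|m IH] n e g He /=.
  split; first by move=> h; exists [::]; rewrite cats0.
  by case=> l [/size0nil -> ]; rewrite cats0.
split.
  case=> x; rewrite -He set_nth_size (IH (size e).+1); last by rewrite size_rcons.
  by case=> l [Hl Hg]; exists (x :: l); split; [rewrite /= Hl | rewrite -cat_rcons].
case=> l [Hl Hg]; case: l Hl Hg => [|x l] //= [Hl] Hg; exists x.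
rewrite -He set_nth_size (IH (size e).+1); last by rewrite size_rcons.
by exists l; split => //; rewrite cat_rcons.
Qed.

Lemma size_length (l : seq R) : size l = length l.
Proof. by elim: l => //= a l ->. Qed.

Lemma map_nth_seq (g : R -> R) (lam : seq R) :
  List.map (fun l => g (nth 0 lam l)) (List.seq 0 (size lam)) = List.map g lam.
Proof.
elim: lam g => //= a lam IH g.
by rewrite -seq_shift List.map_map /= IH.
Qed.

Lemma eval_prodT k e :
  GRing.eval e (prodT k) = List.fold_right Rmult 1
     (List.map (fun l => nth 0 e (NN k + k)%N - nth 0 e (NN k + l)%N) (List.seq 0 k)).
Proof. by rewrite /prodT; elim: (List.seq 0 k) => //= a l ->. Qed.

Lemma size_envA k A : size (envA k A) = NN k.
Proof. by rewrite /envA size_map size_iota. Qed.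

Lemma nth_envA k A i j : (i < k)%N -> (j < k)%N -> nth 0 (envA k A) (i * k + j)%N = A i j.
Proof.
move=> hi hj.
have hk : (0 < k)%N by apply: leq_ltn_trans hi.
have hlt : (i * k + j < k * k)%N.
  by nia.
rewrite /envA (nth_map 0%N) ?size_iota // nth_iota // add0n.
by rewrite divnMDl // divn_small // addn0 modnMDl modn_small.
Qed.

Lemma key k A : all_eigenvalues_real k A <-> ord.holds (envA k A) (fk k).
Proof.
rewrite /fk (holds_exchain k _ (size_envA k A)).
have main : forall lam : seq R, size lam = k ->
   ((forall x, charpoly_eval k A x = List.fold_right Rmult 1 (List.map (fun l => x - l) lam)) <->
    ord.holds (envA k A ++ lam) (ord.Forall (NN k + k)%N (ord.Equal (detT k (mt k)) (prodT k)))).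
  move=> lam hl /=.
  have hs : size (envA k A ++ lam) = (NN k + k)%N by rewrite size_cat size_envA hl.
  have E : forall x, GRing.eval (set_nth 0 (envA k A ++ lam) (NN k + k)%N x) (detT k (mt k)) =
                     charpoly_eval k A x.
    move=> x; rewrite -hs set_nth_size eval_detT /charpoly_eval; apply: det_ext => i j hi hj /=.
    have hi' : (i < k)%N by apply/ssrnat.ltP.
    have hj' : (j < k)%N by apply/ssrnat.ltP.
    have hlt : (i * k + j < NN k)%N by rewrite /NN; nia.
    have h2 : (i * k + j < size (envA k A ++ lam))%N by rewrite hs; nia.
    by rewrite nth_rcons hs ltnn eqxx nth_rcons h2 nth_cat size_envA hlt nth_envA.
  have P : forall x, GRing.eval (set_nth 0 (envA k A ++ lam) (NN k + k)%N x) (prodT k) =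
                     List.fold_right Rmult 1 (List.map (fun l => x - l) lam).
    move=> x; rewrite -hs set_nth_size eval_prodT.
    rewrite nth_rcons size_cat size_envA hl ltnn eqxx.
    rewrite -map_nth_seq hl; congr (List.fold_right _ _ _); apply: List.map_ext_in => l.
    move/List.in_seq => [_ hl'] /=; have hl'' : (l < k)%N by apply/ssrnat.ltP.
    rewrite nth_rcons size_cat size_envA hl ltn_add2l hl'' nth_cat size_envA.
    by rewrite ltnNge leq_addr /= addKn.
  by split => h x; have := h x; rewrite E P.
split.
  case=> lam [hl h]; exists lam; split; first by rewrite size_length.
  by apply/main => //; rewrite size_length.
case=> lam [hl h]; exists lam; split; first by rewrite -size_length.
by apply/main => //; rewrite size_length.
Qed.

Lemma meas_allreal (Omega : Type) (F : (Omega -> Prop) -> Prop) (HF : sigma_algebra F) k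
  (A : Omega -> nat -> nat -> R)
  (HA : forall i j, (i < k)%coq_nat -> (j < k)%coq_nat -> measf F (fun w => A w i j)) :
  F (fun w => all_eigenvalues_real k (A w)).
Proof.
set g := ord.quantifier_elim (fun n s => wproj n s) (ord.to_rform (fk k)).
have wf : ord.qf_form g && ord.rformula g.
  exact: (ord.quantifier_elim_wf (fun i bc => @wf_QE_wproj R i bc) (ord.to_rform_rformula (fk k))).
apply: (F_ext (fun w => ord.qf_eval (envA k (A w)) g)).
  move=> w; rewrite key; split; first by move=> h; apply/rcf_satP; exact h.
  by move/rcf_satP.
apply: (meas_qf HF) wf => i.
case: (ltnP i (k * k)) => hi.
  have hk : (0 < k)%N by rewrite lt0n; apply/eqP => hk0; rewrite hk0 in hi.
  apply: (measf_ext (fun w => A w (i %/ k)%N (i %% k)%N)).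
    by move=> w; rewrite /envA (nth_map 0%N) ?size_iota // nth_iota.
  apply: HA; apply/ssrnat.ltP.
    by rewrite ltn_divLR.
  by rewrite ltn_mod.
apply: (measf_ext (fun _ => 0)); last exact (measf_const HF 0).
by move=> w; rewrite nth_default // size_envA.
Qed.
End MC.

Section PM.
Variable Omega : Type.
Variable F : (Omega -> Prop) -> Prop.
Variable P : (Omega -> Prop) -> R.
Hypothesis HP : probability_measure F P.

Let HF : sigma_algebra F := proj1 HP.

Lemma P_ext (A B : Omega -> Prop) : (forall w, A w <-> B w) -> P A = P B.
Proof.
intros H. f_equal. apply functional_extensionality; intro w; apply propositional_extensionality; auto.
Qed.

Lemma P_nonneg A : F A -> 0 <= P A.
Proof. exact (proj1 (proj2 (proj2 HP)) A). Qed.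

Lemma P_cadd (A : nat -> Omega -> Prop) :
  (forall n, F (A n)) -> (forall n m x, n <> m -> A n x -> A m x -> False) ->
  infinite_sum (fun n => P (A n)) (P (fun x => exists n, A n x)).
Proof. exact (proj2 (proj2 (proj2 HP)) A). Qed.

Lemma P_empty : P (fun _ => False) = 0.
Proof.
assert (H : infinite_sum (fun _ => P (fun _ => False)) (P (fun x => exists n : nat, False))).
{ apply (P_cadd (fun _ _ => False)). intros; apply F_False, HF. intros n m x _ h; destruct h. }
rewrite (P_ext (fun x => exists n : nat, False) (fun _ => False)) in H by (intro; split; [intros [_ h]; exact h | tauto]).
set (c := P (fun _ => False)) in *.
assert (Hc : 0 <= c) by (apply P_nonneg, F_False, HF).
destruct (Rle_lt_or_eq_dec 0 c Hc) as [Hlt|Heq]; [|auto].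
exfalso. destruct (H c Hlt) as [N HN].
specialize (HN (S N) ltac:(lia)). rewrite sum_cte in HN.
unfold R_dist in HN. rewrite S_INR, S_INR in HN.
assert (0 <= INR N) by apply pos_INR.
rewrite Rabs_right in HN by nra. nra.
Qed.

Lemma P_add (A B : Omega -> Prop) : F A -> F B -> (forall w, A w -> B w -> False) ->
  P (fun w => A w \/ B w) = P A + P B.
Proof.
intros HA HB Hd.
set (S := fun n => match n with O => A | 1%nat => B | _ => fun _ => False end).
assert (H := P_cadd S).
rewrite (P_ext (fun x => exists n, S n x) (fun w => A w \/ B w)) in H.
- apply (uniqueness_sum (fun n => P (S n))).
  + apply H.
    * intros [|[|n]]; simpl; auto. apply F_False, HF.
    * intros [|[|n]] [|[|m]] x Hnm; simpl; try tauto; try lia; eauto.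
  + intros eps Heps. exists 1%nat. intros n Hn.
    replace (sum_f_R0 (fun n => P (S n)) n) with (P A + P B).
    * unfold R_dist. rewrite Rminus_diag, Rabs_R0. exact Heps.
    * induction n as [|n IH]; [lia|].
      destruct n as [|n]; [simpl; auto|].
      rewrite tech5, <- IH by lia. simpl. rewrite P_empty. ring.
- intro w; split.
  + intros [[|[|n]] Hn]; simpl in Hn; tauto.
  + intros [H1|H1]; [exists O | exists 1%nat]; exact H1.
Qed.

Lemma P_True : P (fun _ => True) = 1.
Proof. exact (proj1 (proj2 HP)). Qed.

Lemma P_diff (A B : Omega -> Prop) : F A -> F B ->
  P (fun w => A w /\ ~ B w) = P A - P (fun w => A w /\ B w).
Proof.
intros HA HB.
assert (H := P_add (fun w => A w /\ B w) (fun w => A w /\ ~ B w)). cbv beta in H.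
rewrite (P_ext (fun w => (A w /\ B w) \/ (A w /\ ~ B w)) A) in H.
- rewrite H; [ring| | |tauto]; apply F_and; auto. apply F_compl; auto.
- intro w; destruct (classic (B w)); tauto.
Qed.

Lemma P_mono (A B : Omega -> Prop) : F A -> F B -> (forall w, A w -> B w) -> P A <= P B.
Proof.
intros HA HB Hs.
assert (H := P_diff B A HB HA).
rewrite (P_ext (fun w => B w /\ A w) A) in H by (intro w; split; [tauto| intro; split; auto]).
assert (0 <= P (fun w => B w /\ ~ A w)) by (apply P_nonneg, F_and, F_compl; auto).
lra.
Qed.

Lemma P_le1 A : F A -> P A <= 1.
Proof. intros HA. rewrite <- P_True. apply P_mono; auto. apply F_True, HF. Qed.

Lemma P_compl A : F A -> P (fun w => ~ A w) = 1 - P A.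
Proof.
intros HA. rewrite <- P_True.
rewrite (P_ext (fun _ => True) (fun w => A w \/ ~ A w)) by (intro w; tauto).
rewrite P_add; auto. ring. apply F_compl; auto.
Qed.

Lemma F_forall_list (A : nat -> Omega -> Prop) (L : list nat) :
  (forall m, In m L -> F (A m)) -> F (fun w => forall m, In m L -> A m w).
Proof.
intros H. induction L as [|a L IH].
- apply (F_ext (fun _ => True)). intro; simpl; tauto. apply F_True, HF.
- apply (F_ext (fun w => A a w /\ (forall m, In m L -> A m w))).
  + intro w; simpl; split.
    * intros [H1 H2] m [<-|Hm]; auto.
    * intros H1; split; auto.
  + apply F_and; auto. apply H; simpl; auto. apply IH. intros; apply H; simpl; auto.
Qed.

End PM.

Lemma NoDup_map_pair {A B : Type} (a : A) (l : list B) : NoDup l -> NoDup (map (pair a) l).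
Proof.
induction 1 as [|b l Hb Hl IH]; simpl; constructor; auto.
rewrite in_map_iff. intros [x [Hx Hin]]. injection Hx as ->. auto.
Qed.

Lemma NoDup_prod {A B : Type} (l : list A) (l' : list B) :
  NoDup l -> NoDup l' -> NoDup (list_prod l l').
Proof.
intros Hl Hl'. induction Hl as [|a l Ha Hl IH]; simpl; [constructor|].
apply NoDup_app; auto. apply NoDup_map_pair; auto.
intros [x y] H1 H2. apply in_map_iff in H1. destruct H1 as [z [Hz _]]. injection Hz as -> ->.
apply in_prod_iff in H2. tauto.
Qed.

Lemma fold_mult_const (p : R) (l : list (nat * nat * nat)) (g : nat * nat * nat -> R) :
  (forall t, In t l -> g t = p) -> fold_right Rmult 1 (map g l) = p ^ length l.
Proof.
induction l as [|t l IH]; intros H; simpl; auto.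
rewrite H, IH; auto. intros; apply H; simpl; auto. simpl; auto.
Qed.

Lemma sum_scal k (c : R) (f : nat -> R) : sumR k (fun l => c * f l) = c * sumR k f.
Proof.
unfold sumR. induction (seq 0 k) as [|a s IH]; simpl; [ring|]. rewrite IH. ring.
Qed.

Lemma rank1_prod k (M : nat -> nat -> nat -> R) (a : R) (m : nat) :
  (1 <= m)%nat -> (forall i j, (i < k)%nat -> (j < k)%nat -> M m i j = a) ->
  forall n, (m <= n)%nat -> exists u v : nat -> R,
    forall i j, (i < k)%nat -> (j < k)%nat -> mat_prod k M n i j = u i * v j.
Proof.
intros Hm HM n. induction n as [|n IH]; intros Hn; [lia|].
destruct (Nat.eq_dec m (S n)) as [Heq|Hne]; [subst m|].
- exists (fun i => sumR k (fun l => mat_prod k M n i l * a)), (fun _ => 1).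
  intros i j Hi Hj. simpl. unfold mat_mul. rewrite Rmult_1_r.
  apply sumR_ext. intros l Hl. rewrite HM; auto.
- destruct (IH ltac:(lia)) as [u [v Huv]].
  exists u, (fun j => sumR k (fun l => v l * M (S n) l j)).
  intros i j Hi Hj. simpl. unfold mat_mul. rewrite <- sum_scal.
  apply sumR_ext. intros l Hl. rewrite Huv; auto. ring.
Qed.

Lemma measf_sumR (Omega : Type) (F : (Omega -> Prop) -> Prop) (HF : sigma_algebra F) k
  (f : Omega -> nat -> R) :
  (forall l, (l < k)%nat -> measf F (fun w => f w l)) -> measf F (fun w => sumR k (f w)).
Proof.
intros H. unfold sumR.
assert (G : forall s, (forall l, In l s -> (l < k)%nat) ->
   measf F (fun w => fold_right Rplus 0 (map (f w) s))).
{ induction s as [|a s IH]; intros Hs; simpl.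
  - exact (measf_const HF 0).
  - apply (measf_plus HF); [apply H, Hs; simpl; auto|apply IH; intros; apply Hs; simpl; auto]. }
apply G. intros l Hl. apply in_seq in Hl. lia.
Qed.

Lemma pow_le1 (x : R) n : 0 <= x -> x <= 1 -> x ^ n <= 1.
Proof.
intros H0 H1. induction n as [|n IH]; simpl; [lra|].
assert (0 <= x ^ n) by (apply pow_le; auto). nra.
Qed.

Theorem main_thm
  (mu : (R -> Prop) -> R)
  (Hmu : probability_measure Borel mu)
  (Hatom : exists x : R, mu (fun y => y = x) > 0)
  (k : nat) (Hk : (1 <= k)%nat)
  (Omega : Type) (F : (Omega -> Prop) -> Prop) (P : (Omega -> Prop) -> R)
  (HP : probability_measure F P)
  (X : nat -> nat -> nat -> Omega -> R)
  (Hmeas : forall n i j, (i < k)%nat -> (j < k)%nat ->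
     forall B, Borel B -> F (fun w => B (X n i j w)))
  (Hlaw : forall n i j, (i < k)%nat -> (j < k)%nat ->
     forall B, Borel B -> P (fun w => B (X n i j w)) = mu B)
  (Hindep : forall (l : list (nat * nat * nat)) (B : nat * nat * nat -> R -> Prop),
     NoDup l ->
     (forall t, In t l -> (snd (fst t) < k)%nat /\ (snd t < k)%nat /\ Borel (B t)) ->
     P (fun w => forall t, In t l -> B t (X (fst (fst t)) (snd (fst t)) (snd t) w))
     = fold_right Rmult 1
         (map (fun t => P (fun w => B t (X (fst (fst t)) (snd (fst t)) (snd t) w))) l)) :
  Un_cv (fun n => P (fun w =>
           all_eigenvalues_real k (mat_prod k (fun (m i j : nat) => X m i j w) n))) 1.
Proof.
assert (HF : sigma_algebra F) by apply HP.
destruct Hatom as [a Ha].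
set (p := mu (fun y => y = a)) in *.
assert (Hp1 : p <= 1).
{ apply (P_le1 R Borel mu Hmu). apply Borel_singleton. }
set (q := p ^ (k * k)).
assert (Hq0 : 0 < q) by (apply pow_lt; lra).
assert (Hq1 : q <= 1) by (apply pow_le1; lra).
assert (HXm : forall m i j, (i < k)%nat -> (j < k)%nat -> measf F (fun w => X m i j w)).
{ intros m i j Hi Hj c. apply (Hmeas m i j Hi Hj (fun x => x <= c)). intros G _ HG. apply HG. }
set (E := fun m w => forall i j, (i < k)%nat -> (j < k)%nat -> X m i j w = a).
assert (HE : forall m, F (E m)).
{ intro m. apply (F_ext (fun w => forall i, In i (seq 0 k) -> (fun i w => forall j, In j (seq 0 k) -> X m i j w = a) i w)).
  - intro w; unfold E; split.
    + intros H i j Hi Hj. apply H; apply in_seq; lia.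
    + intros H i Hi j Hj. apply in_seq in Hi, Hj. apply H; lia.
  - apply (F_forall_list _ F P HP). intros i Hi.
    apply (F_forall_list _ F P HP (fun j w => X m i j w = a)). intros j Hj.
    apply in_seq in Hi, Hj.
    apply (Hmeas m i j ltac:(lia) ltac:(lia) (fun y => y = a)), Borel_singleton. }
assert (HPos : forall Pos, NoDup Pos -> P (fun w => forall m, In m Pos -> E m w) = q ^ length Pos).
{ intros Pos HPos.
  set (l := list_prod (list_prod Pos (seq 0 k)) (seq 0 k)).
  assert (Hl : forall t, In t l -> In (fst (fst t)) Pos /\ (snd (fst t) < k)%nat /\ (snd t < k)%nat).
  { intros [[m i] j] Ht. unfold l in Ht. apply in_prod_iff in Ht as [Ht Hj].
    apply in_prod_iff in Ht as [Hm Hi]. apply in_seq in Hi, Hj. simpl. repeat split; auto; lia. }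
  rewrite (P_ext _ P (fun w => forall m, In m Pos -> E m w)
     (fun w => forall t, In t l -> (fun (_ : nat * nat * nat) y => y = a) t (X (fst (fst t)) (snd (fst t)) (snd t) w))).
  - etransitivity; [apply (Hindep l (fun _ y => y = a))|].
    + apply NoDup_prod; [apply NoDup_prod|]; auto; apply seq_NoDup.
    + intros t Ht. destruct (Hl t Ht) as [_ [Hi Hj]]. repeat split; auto. apply Borel_singleton.
    + rewrite (fold_mult_const p).
      * unfold l. rewrite !length_prod, length_seq. unfold q. rewrite <- pow_mult. f_equal. lia.
      * intros t Ht. destruct (Hl t Ht) as [_ [Hi Hj]]. unfold p. apply (Hlaw _ _ _ Hi Hj (fun y => y = a)). apply Borel_singleton.
  - intro w. split.
    + intros H t Ht. destruct (Hl t Ht) as [Hm [Hi Hj]]. apply H; auto.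
    + intros H m Hm i j Hi Hj. apply (H (m, i, j)). unfold l.
      apply in_prod_iff; split; [apply in_prod_iff; split|]; auto; apply in_seq; lia. }
assert (HC : forall M Pos, NoDup (M ++ Pos) ->
  P (fun w => (forall m, In m Pos -> E m w) /\ (forall m, In m M -> ~ E m w))
  = q ^ length Pos * (1 - q) ^ length M).
{ induction M as [|b M IH]; intros Pos Hnd.
  - simpl. rewrite Rmult_1_r. rewrite <- HPos by auto. apply P_ext. intro w; simpl; tauto.
  - assert (Hnd1 : NoDup (M ++ Pos)) by (simpl in Hnd; apply NoDup_cons_iff in Hnd; tauto).
    assert (Hnd2 : NoDup (M ++ b :: Pos)).
    { apply (Permutation_NoDup (Permutation_middle M Pos b)); auto. }
    set (C := fun w => (forall m, In m Pos -> E m w) /\ (forall m, In m M -> ~ E m w)).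
    assert (HCF : F C).
    { apply (F_and HF); apply (F_forall_list _ F P HP); intros; auto. apply (F_compl HF), HE. }
    rewrite (P_ext _ P _ (fun w => C w /\ ~ E b w)).
    + rewrite (P_diff _ F P HP); auto.
      rewrite (P_ext _ P (fun w => C w /\ E b w)
         (fun w => (forall m, In m (b :: Pos) -> E m w) /\ (forall m, In m M -> ~ E m w))).
      * unfold C. rewrite IH, IH by auto. simpl. ring.
      * intro w. unfold C. simpl. split.
        -- intros [[H1 H2] H3]. split; auto. intros m [<-|Hm]; auto.
        -- intros [H1 H2]. repeat split; auto.
    + intro w. unfold C. simpl. split.
      * intros [H1 H2]. repeat split; auto.
      * intros [[H1 H2] H3]. split; auto. intros m [<-|Hm]; auto. }
set (G := fun n w => all_eigenvalues_real k (mat_prod k (fun (m i j : nat) => X m i j w) n)).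
assert (HG : forall n, F (G n)).
{ intro n. unfold G. apply (MC.meas_allreal HF).
  induction n as [|n IH]; intros i j Hi Hj.
  - simpl. exact (measf_const HF (mat_id i j)).
  - simpl. unfold mat_mul. apply (measf_sumR _ F HF). intros l Hl.
    apply (measf_mult HF); [apply IH; auto|apply HXm; auto]. }
assert (Hlow : forall n, 1 - (1 - q) ^ n <= P (G n)).
{ intro n.
  set (H := fun w => (forall m, In m (@nil nat) -> E m w) /\ (forall m, In m (seq 1 n) -> ~ E m w)).
  assert (HHF : F H).
  { apply (F_and HF); apply (F_forall_list _ F P HP); intros; [simpl in *; tauto|]. apply (F_compl HF), HE. }
  assert (HH : P H = (1 - q) ^ n).
  { unfold H. rewrite HC. simpl. rewrite length_seq. ring. rewrite app_nil_r. apply seq_NoDup. }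
  rewrite <- HH, <- (P_compl _ F P HP) by auto.
  apply (P_mono _ F P HP); auto. apply (F_compl HF); auto.
  intros w Hw. unfold H in Hw.
  assert (Hex : exists m, In m (seq 1 n) /\ E m w).
  { apply NNPP. intro Hn. apply Hw. split; [simpl; tauto|].
    intros m Hm HEm. apply Hn. exists m. auto. }
  destruct Hex as [m [Hm HEm]]. apply in_seq in Hm.
  destruct (rank1_prod k (fun (m i j : nat) => X m i j w) a m ltac:(lia) HEm n ltac:(lia)) as [u [v Huv]].
  exact (MC.rank1_real Huv). }
intros eps Heps.
destruct (pow_lt_1_zero (1 - q) ltac:(rewrite Rabs_right; lra) eps Heps) as [N HN].
exists N. intros n Hn. specialize (HN n Hn). specialize (Hlow n).
assert (Hup : P (G n) <= 1) by (apply (P_le1 _ F P HP); auto).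
assert (0 <= (1 - q) ^ n) by (apply pow_le; lra).
rewrite Rabs_right in HN by lra.
unfold R_dist. fold (G n). rewrite Rabs_left1 by lra. lra.
Qed.

Theorem mainTheorem18
  (mu : (R -> Prop) -> R)
  (Hmu : probability_measure Borel mu)
  (Hatom : exists x : R, mu (fun y => y = x) > 0)
  (k : nat) (Hk : (1 <= k)%nat)
  (Omega : Type) (F : (Omega -> Prop) -> Prop) (P : (Omega -> Prop) -> R)
  (HP : probability_measure F P)
  (X : nat -> nat -> nat -> Omega -> R)
  (Hmeas : forall n i j, (i < k)%nat -> (j < k)%nat ->
     forall B, Borel B -> F (fun w => B (X n i j w)))
  (Hlaw : forall n i j, (i < k)%nat -> (j < k)%nat ->
     forall B, Borel B -> P (fun w => B (X n i j w)) = mu B)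
  (Hindep : forall (l : list (nat * nat * nat)) (B : nat * nat * nat -> R -> Prop),
     NoDup l ->
     (forall t, In t l -> (snd (fst t) < k)%nat /\ (snd t < k)%nat /\ Borel (B t)) ->
     P (fun w => forall t, In t l -> B t (X (fst (fst t)) (snd (fst t)) (snd t) w))
     = fold_right Rmult 1
         (map (fun t => P (fun w => B t (X (fst (fst t)) (snd (fst t)) (snd t) w))) l)) :
  Un_cv (fun n => P (fun w =>
           all_eigenvalues_real k (mat_prod k (fun (m i j : nat) => X m i j w) n))) 1.
Proof.
exact (main_thm mu Hmu Hatom k Hk Omega F P HP X Hmeas Hlaw Hindep).
Qed.
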